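(* Let $L=L_1\times\cdots\times L_k$ where each $L_i$ ($i=1,\dots,k$) is a $C$-lattice. If $q_i$ is a quasi $n_i$-absorbing element of $L_i$ for all $i=1,\dots,k$, then $(q_1,\dots,q_k)$ is a quasi $m$-absorbing element of $L$, where $m=\max\{n_1,\dots,n_k\}+1$.
   Context: A multiplicative lattice is a complete lattice with least element $0$ and compact greatest element $1$, equipped with a commutative, associative product that distributes over arbitrary joins and has $1$ as multiplicative identity. An element $a$ is compact if $a\le\bigvee_{\alpha\in I}a_\alpha$ implies $a\le\bigvee_{\alpha\in I_0}a_\alpha$ for some finite $I_0\subseteq I$. A $C$-lattice is a multiplicative lattice generated under joins by a multiplicatively closed set of compact elements. $L_1\times\cdots\times L_k$ carries the componentwise order and product. $a^0=1$. For a positive integer $t$, a proper element $q$ ($q<1$) of a multiplicative lattice $M$ is quasi $t$-absorbing if whenever $a^tb\le q$ for some compact $a,b\in M$, then $a^t\le q$ or $a^{t-1}b\le q$. *)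

(* Defs.v *)
From mathcomp Require Import all_boot.
From Stdlib Require List.
Set Implicit Arguments. Unset Strict Implicit. Unset Printing Implicit Defensive.

Record mlat := MLat {
  car :> Type;
  le : car -> car -> Prop;
  sup : (car -> Prop) -> car;
  bot : car;
  top : car;
  mul : car -> car -> car }.

Arguments le {m}. Arguments sup {m}. Arguments bot {m}. Arguments top {m}.
Arguments mul {m}.

Definition jn (M : mlat) (I : Type) (f : I -> M) : M := sup (fun x => exists i, x = f i).

Fixpoint mpow (M : mlat) (a : M) (t : nat) : M :=
  match t with 0 => top | t'.+1 => mul a (mpow a t') end.

Definition compact (M : mlat) (a : M) : Prop :=
  forall (I : Type) (f : I -> M), le a (jn f) ->
    exists I0 : seq I, le a (jn (fun j : {i : I | Stdlib.Lists.List.In i I0} => f (proj1_sig j))).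

Definition is_mult_lattice (M : mlat) : Prop :=
  (forall x : M, le x x) /\
  (forall x y : M, le x y -> le y x -> x = y) /\
  (forall x y z : M, le x y -> le y z -> le x z) /\
  (forall (P : M -> Prop) x, P x -> le x (sup P)) /\
  (forall (P : M -> Prop) u, (forall x, P x -> le x u) -> le (sup P) u) /\
  (forall x : M, le bot x /\ le x top) /\
  compact (top : M) /\
  (forall x y : M, mul x y = mul y x) /\
  (forall x y z : M, mul x (mul y z) = mul (mul x y) z) /\
  (forall (a : M) (I : Type) (f : I -> M), mul a (jn f) = jn (fun i => mul a (f i))) /\
  (forall x : M, mul top x = x).

Definition is_C_lattice (M : mlat) : Prop :=
  is_mult_lattice M /\
  exists S : M -> Prop,
    [/\ (forall x, S x -> compact x),
        S top,
        (forall x y, S x -> S y -> S (mul x y)) &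
        (forall x : M, exists P : M -> Prop, (forall y, P y -> S y) /\ x = sup P)].

Definition proper (M : mlat) (q : M) : Prop := le q top /\ q <> top.

Definition quasi_absorbing (M : mlat) (t : nat) (q : M) : Prop :=
  0 < t /\ proper q /\
  forall a b : M, compact a -> compact b ->
    le (mul (mpow a t) b) q -> le (mpow a t) q \/ le (mul (mpow a t.-1) b) q.

Definition prod_mlat (k : nat) (L : 'I_k -> mlat) : mlat :=
  @MLat (forall i : 'I_k, L i)
    (fun x y => forall i, le (x i) (y i))
    (fun P i => sup (fun y => exists x, P x /\ x i = y))
    (fun i => bot) (fun i => top)
    (fun x y i => mul (x i) (y i)).

(* Main.v *)
Require Import Defs.
From mathcomp Require Import all_boot.
From mathcomp Require Import zify.
From Stdlib Require Import Classical.

Set Implicit Arguments. Unset Strict Implicit. Unset Printing Implicit Defensive.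
Local Notation mul := Defs.mul.
Local Notation le := Defs.le.

Lemma ml_trans (M : mlat) (hM : is_mult_lattice M) (x y z : M) : le x y -> le y z -> le x z.
Proof. by case: hM => _ [_ [h _]]; apply: h. Qed.
Lemma ml_refl (M : mlat) (hM : is_mult_lattice M) (x : M) : le x x.
Proof. by case: hM => h _; apply: h. Qed.
Lemma ml_anti (M : mlat) (hM : is_mult_lattice M) (x y : M) : le x y -> le y x -> x = y.
Proof. by case: hM => _ [h _]; apply: h. Qed.
Lemma ml_ub (M : mlat) (hM : is_mult_lattice M) (P : M -> Prop) x : P x -> le x (sup P).
Proof. by case: hM => _ [_ [_ [h _]]]; apply: h. Qed.
Lemma ml_lub (M : mlat) (hM : is_mult_lattice M) (P : M -> Prop) u :
  (forall x, P x -> le x u) -> le (sup P) u.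
Proof. by case: hM => _ [_ [_ [_ [h _]]]]; apply: h. Qed.
Lemma ml_bot (M : mlat) (hM : is_mult_lattice M) (x : M) : le bot x.
Proof. by case: hM => _ [_ [_ [_ [_ [h _]]]]]; case: (h x). Qed.
Lemma ml_top (M : mlat) (hM : is_mult_lattice M) (x : M) : le x top.
Proof. by case: hM => _ [_ [_ [_ [_ [h _]]]]]; case: (h x). Qed.
Lemma ml_mulC (M : mlat) (hM : is_mult_lattice M) (x y : M) : mul x y = mul y x.
Proof. by case: hM => _ [_ [_ [_ [_ [_ [_ [h _]]]]]]]; apply: h. Qed.
Lemma ml_mulA (M : mlat) (hM : is_mult_lattice M) (x y z : M) :
  mul x (mul y z) = mul (mul x y) z.
Proof. by case: hM => _ [_ [_ [_ [_ [_ [_ [_ [h _]]]]]]]]; apply: h. Qed.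
Lemma ml_jn (M : mlat) (hM : is_mult_lattice M) (a : M) (I : Type) (f : I -> M) :
  mul a (jn f) = jn (fun i => mul a (f i)).
Proof. by case: hM => _ [_ [_ [_ [_ [_ [_ [_ [_ [h _]]]]]]]]]; apply: h. Qed.
Lemma ml_1m (M : mlat) (hM : is_mult_lattice M) (x : M) : mul top x = x.
Proof. by case: hM => _ [_ [_ [_ [_ [_ [_ [_ [_ [_ h]]]]]]]]]; apply: h. Qed.

Lemma ml_mono (M : mlat) (hM : is_mult_lattice M) (x y z : M) :
  le x y -> le (mul z x) (mul z y).
Proof.
move=> hxy.
have ey : y = jn (fun b : bool => if b then x else y).
  apply: (ml_anti hM).
    by apply: (ml_ub hM); exists false.
  apply: (ml_lub hM) => w [[|] ->] //; exact: ml_refl.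
rewrite ey (ml_jn hM); apply: (ml_ub hM); by exists true.
Qed.

Lemma ml_mul_le (M : mlat) (hM : is_mult_lattice M) (x y q : M) :
  le x q -> le (mul x y) q.
Proof.
move=> hx; apply: (ml_trans hM) hx.
have := @ml_mono _ hM _ _ x (ml_top hM y).
by rewrite (ml_mulC hM x top) (ml_1m hM).
Qed.

Lemma mpow_add (M : mlat) (hM : is_mult_lattice M) (a : M) s t :
  mpow a (s + t) = mul (mpow a s) (mpow a t).
Proof.
elim: s => [|s IH] /=; first by rewrite (ml_1m hM).
by rewrite IH (ml_mulA hM).
Qed.

Lemma supE (M : mlat) (hM : is_mult_lattice M) (P : M -> Prop) :
  sup P = jn (fun p : {x | P x} => proj1_sig p).
Proof.
apply: (ml_anti hM).
  apply: (ml_lub hM) => x Px; apply: (ml_ub hM); by exists (exist _ x Px).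
apply: (ml_lub hM) => x [[p Pp] ->]; exact: (ml_ub hM).
Qed.

Lemma key (M : mlat) (hC : is_C_lattice M) N (q a b : M) Mx :
  quasi_absorbing N q -> compact a -> (N <= Mx)%N ->
  le (mul (mpow a Mx.+1) b) q -> le (mul (mpow a Mx) b) q.
Proof.
case: hC => hM [S [Scomp _ _ Sgen]].
move=> [Npos [_ hq]] ha hNM hab.
pose d := (Mx.+1 - N)%N.
pose b' := mul (mpow a d) b.
have hb' : le (mul (mpow a N) b') q.
  rewrite /b' (ml_mulA hM) -(mpow_add hM).
  by have -> : (N + d = Mx.+1)%N by rewrite /d; lia.
case: (classic (le (mpow a N) q)) => hN.
  have -> : Mx = (N + (Mx - N))%N by lia.
  rewrite (mpow_add hM) -(ml_mulA hM); exact: ml_mul_le.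
have [P [PS eP]] := Sgen b'.
have hs : forall s, P s -> le (mul (mpow a N.-1) s) q.
  move=> s Ps.
  have sb : le s b' by rewrite eP; exact: (ml_ub hM).
  have := hq a s ha (Scomp _ (PS _ Ps)) (ml_trans hM (@ml_mono _ hM _ _ (mpow a N) sb) hb').
  by case.
have : le (mul (mpow a N.-1) b') q.
  rewrite eP (supE hM) (ml_jn hM).
  apply: (ml_lub hM) => x [[p Pp] ->]; exact: hs.
rewrite /b' (ml_mulA hM) -(mpow_add hM).
by have -> : (N.-1 + d = Mx)%N by rewrite /d; lia.
Qed.

Definition upd (k : nat) (L : 'I_k -> mlat) (i : 'I_k) (v : L i) : forall i', L i' :=
  fun i' => match @eqP _ i i' with ReflectT e => eq_rect i L v i' e | ReflectF _ => top end.

Lemma upd_eq (k : nat) (L : 'I_k -> mlat) (i : 'I_k) (v : L i) : upd v i = v.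
Proof.
rewrite /upd; case: eqP => [e|//].
by have -> : e = erefl i by apply: eq_axiomK.
Qed.

Lemma upd_neq (k : nat) (L : 'I_k -> mlat) (i i' : 'I_k) (v : L i) : i' != i -> upd v i' = top.
Proof.
move=> ne; rewrite /upd; case: eqP => [e|//].
by rewrite e eqxx in ne.
Qed.

Lemma comp_compact (k : nat) (L : 'I_k -> mlat) (hL : forall i, is_mult_lattice (L i))
  (a : prod_mlat L) i : compact a -> compact (a i).
Proof.
move=> ha I g hle.
case: (classic (inhabited I)) => [[j0]|nI]; last first.
  exists [::]; apply: (@ml_trans (L i) (hL i) _ _ _ hle).
  apply: (@ml_trans (L i) (hL i) _ _ _ _ (ml_bot (hL i) _)).
  apply: (ml_lub (hL i)) => x [j _]; by case: nI.
pose f := fun j : I => (upd (g j) : prod_mlat L).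
have hf : le a (jn f).
  move=> i' /=.
  case: (eqVneq i' i) => [->|ne].
    apply: (@ml_trans (L i) (hL i) _ _ _ hle).
    apply: (ml_lub (hL i)) => y [j ->].
    apply: (ml_ub (hL i)); exists (f j); split; first by exists j.
    by rewrite /f upd_eq.
  apply: (@ml_trans (L i') (hL i') _ _ _ (ml_top (hL i') _)).
  apply: (ml_ub (hL i')); exists (f j0); split; first by exists j0.
  by rewrite /f upd_neq.
have [I0 h0] := ha I f hf.
exists I0.
apply: (@ml_trans (L i) (hL i) _ _ _ (h0 i)) => /=.
apply: (ml_lub (hL i)) => y [x [[j ->] <-]].
apply: (ml_ub (hL i)); exists j; by rewrite /f upd_eq.
Qed.

Lemma mpow_prod (k : nat) (L : 'I_k -> mlat) (a : prod_mlat L) t i :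
  mpow a t i = mpow (a i) t.
Proof. by elim: t => [|t IH] //=; rewrite IH. Qed.

Theorem mainTheorem13 (k : nat) (hk : 0 < k) (L : 'I_k -> mlat)
  (hL : forall i, is_C_lattice (L i))
  (n : 'I_k -> nat) (q : forall i : 'I_k, L i)
  (hq : forall i, quasi_absorbing (n i) (q i)) :
  @quasi_absorbing (prod_mlat L) ((\max_(i < k) n i).+1) q.
Proof.
have hM : forall i, is_mult_lattice (L i) by move=> i; case: (hL i).
split => //; split.
  split.
    move=> i; case: (hq i) => _ [[h _] _]; exact: h.
  move=> eq; case: (hq (Ordinal hk)) => _ [[_ h] _]; apply: h.
  by rewrite eq.
move=> a b ha hb hab; right => i /=.
have := hab i; rewrite /= !mpow_prod => h.
apply: (key (hL i) (hq i) (comp_compact hM ha) _ h).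
exact: leq_bigmax.
Qed.
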